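(* Let $\phi:(\Gamma,w)\to(\Gamma',w')$ be a pseudo-harmonic morphism of vertex-weighted metric graphs with respect to loopless models $(G,\ell)$ and $(G',\ell')$. Then $\deg(\phi^*(K_{(\Gamma',w')}))=\deg(\phi)\deg(K_{(\Gamma',w')})$.
   Context: A vertex-weighted metric graph $(\Gamma,w)$ with loopless model $(G,\ell)$: $G$ a finite connected loopless multigraph, $\ell:E(G)\to\mathbb{R}_{>0}$, $w:V(G)\to\mathbb{Z}_{\ge0}$; $val(v)$ is the number of edges at $v$. Canonical divisor: $K_{(\Gamma,w)}=\sum_{v\in V(G)}(val(v)-2+2w(v))(v)$. A morphism of loopless models maps vertices to vertices and each edge $e=xy$ either to a vertex $\phi(x)=\phi(e)=\phi(y)$ ($U_\phi(e)=0$) or to an edge between $\phi(x),\phi(y)$ with $U_\phi(e)=\ell'(\phi(e))/\ell(e)\in\mathbb{Z}_{>0}$. Pseudo-harmonic: $M_\phi(v)=\sum_{e\ni v,\phi(e)=e'}U_\phi(e)$ is the same for all $e'\in E(G')$ incident to $\phi(v)$. $\deg\phi=\sum_{\phi(e)=e'}U_\phi(e)$ for any $e'\in E(G')$. Pullback: $\phi^*D'=\sum_{v\in V(G)}M_\phi(v)D'(\phi(v))(v)$. *)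

(* Defs.v *)
From HB Require Import structures.
From mathcomp Require Import all_boot all_order all_algebra.
From mathcomp Require Import reals.
Set Implicit Arguments. Unset Strict Implicit. Unset Printing Implicit Defensive.
Import Order.TTheory GRing.Theory Num.Theory.
Local Open Scope ring_scope.

Record wmodel (R : realType) := WModel {
  mV : finType;
  mE : finType;
  msrc : mE -> mV;
  mtgt : mE -> mV;
  mlen : mE -> R;
  mwt : mV -> nat }.

Section Defs.
Variable R : realType.

Section Graph.
Variable G : wmodel R.

Definition incident (v : mV G) (e : mE G) : bool :=
  (msrc e == v) || (mtgt e == v).

Definition adjacent : rel (mV G) :=
  fun u v => [exists e : mE G, ((msrc e == u) && (mtgt e == v))
                             || ((msrc e == v) && (mtgt e == u))].

Definition loopless : Prop := forall e : mE G, msrc e != mtgt e.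
Definition connected_graph : Prop := forall u v : mV G, connect adjacent u v.
Definition positive_lengths : Prop := forall e : mE G, 0 < mlen e.

Definition loopless_model : Prop :=
  [/\ loopless, connected_graph & positive_lengths].

Definition val (v : mV G) : nat := #|[set e : mE G | incident v e]|.

Definition divisor := mV G -> int.
Definition deg_div (D : divisor) : int := \sum_(v : mV G) D v.

Definition Kcan : divisor :=
  fun v => (val v)%:Z - 2 + 2 * (mwt v)%:Z.
End Graph.

Section Morphism.
Variables (G G' : wmodel R).
Variable phiV : mV G -> mV G'.
(* each edge is sent either to a vertex (inl) or to an edge (inr) *)
Variable phiE : mE G -> mV G' + mE G'.

Definition is_morphism : Prop :=
  forall e : mE G,
    match phiE e with
    | inl x => phiV (msrc e) = x /\ phiV (mtgt e) = x
    | inr e' =>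
        ((phiV (msrc e) = msrc e' /\ phiV (mtgt e) = mtgt e')
         \/ (phiV (msrc e) = mtgt e' /\ phiV (mtgt e) = msrc e'))
        /\ (mlen e' / mlen e \is a Num.nat) /\ (0 < mlen e' / mlen e)
    end.

Definition U (e : mE G) : nat :=
  match phiE e with
  | inl _ => 0%N
  | inr e' => Num.truncn (mlen e' / mlen e)
  end.

Definition Mloc (v : mV G) (e' : mE G') : nat :=
  \sum_(e : mE G | incident v e && (phiE e == inr e')) U e.

Definition pseudo_harmonic : Prop :=
  forall (v : mV G) (e1 e2 : mE G'),
    incident (phiV v) e1 -> incident (phiV v) e2 -> Mloc v e1 = Mloc v e2.

(* M_phi(v), computed with some edge of G' incident to phi(v)
   (well defined under pseudo-harmonicity; 0 if there is none) *)
Definition M (v : mV G) : nat :=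
  match [pick e' : mE G' | incident (phiV v) e'] with
  | Some e' => Mloc v e'
  | None => 0%N
  end.

(* deg phi, computed with respect to the edge e' of G' *)
Definition deg_at (e' : mE G') : nat :=
  \sum_(e : mE G | phiE e == inr e') U e.

Definition pullback (D' : divisor G') : divisor G :=
  fun v => (M v)%:Z * D' (phiV v).
End Morphism.
End Defs.

(* Main.v *)
Require Import Defs.
From HB Require Import structures.
From mathcomp Require Import all_boot all_order all_algebra.
From mathcomp Require Import reals.
Import Order.TTheory GRing.Theory Num.Theory.
Local Open Scope ring_scope.

Section Aux.
Variables (R : realType) (G G' : wmodel R)
    (phiV : mV G -> mV G') (phiE : mE G -> mV G' + mE G').
Hypothesis llG : loopless G.
Hypothesis llG' : loopless G'.
Hypothesis mor : is_morphism phiV phiE.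

Lemma one_endpoint (e : mE G) (e0 : mE G') (x : mV G') :
  phiE e = inr e0 -> incident x e0 ->
  exists v0, forall v, ((phiV v == x) && incident v e) = (v == v0).
Proof.
move=> He Hx; have := mor e; rewrite He => -[Hend _].
have ne := llG e; have ne0 := llG' e0.
rewrite /incident in Hx *.
have key : forall a b, phiV (msrc e) = a -> phiV (mtgt e) = b -> a != b ->
   (a == x) || (b == x) -> exists v0, forall v,
   ((phiV v == x) && ((msrc e == v) || (mtgt e == v))) = (v == v0).
  move=> a b Ha Hb nab /orP[/eqP ax|/eqP bx].
  - exists (msrc e) => v; case: (eqVneq v (msrc e)) => [->|nvs].
      by rewrite Ha ax !eqxx.
    rewrite /=; case: (eqVneq v (mtgt e)) => [->|nvt].
      by rewrite Hb andbT -ax eq_sym (negbTE nab).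
    by rewrite andbF.
  - exists (mtgt e) => v; case: (eqVneq v (mtgt e)) => [->|nvt].
      by rewrite Hb bx !eqxx orbT.
    rewrite orbF; case: (eqVneq v (msrc e)) => [->|nvs].
      by rewrite Ha andbT -bx (negbTE nab).
    by rewrite andbF.
case: Hend => -[Hs Ht].
- by apply: (key _ _ Hs Ht ne0).
- apply: (key _ _ Hs Ht); first by rewrite eq_sym.
  by rewrite orbC.
Qed.

Lemma fiber_sum (e0 : mE G') (x : mV G') : incident x e0 ->
  (\sum_(v | phiV v == x) Mloc phiE v e0)%N = deg_at phiE e0.
Proof.
move=> Hx; rewrite /Mloc /deg_at.
rewrite (exchange_big_dep (fun e => phiE e == inr e0)) /=; last by move=> i j _ /andP[].
apply: eq_bigr => e /eqP He.
have [v0 Hv0] := @one_endpoint e e0 x He Hx.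
rewrite (eq_bigl (fun v => v == v0)) ?big_pred1_eq // => v.
by rewrite He eqxx andbT Hv0.
Qed.

Hypothesis ph : pseudo_harmonic phiV phiE.

Lemma ph_const x e1 e2 : incident x e1 -> incident x e2 ->
  deg_at phiE e1 = deg_at phiE e2.
Proof.
move=> H1 H2; rewrite -(@fiber_sum e1 x H1) -(@fiber_sum e2 x H2).
apply: eq_bigr => v /eqP Hv; apply: ph; by rewrite Hv.
Qed.

Hypothesis cG' : connected_graph G'.

Lemma has_edge (e' : mE G') (x : mV G') : exists e, incident x e.
Proof.
have /connectP[p Hp Hl] := cG' x (msrc e').
case: p Hp Hl => [|y p] /=.
  by move=> _ Hl; exists e'; rewrite /incident Hl eqxx.
move=> /andP[/existsP[e He] _] _; exists e; rewrite /incident.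
by case/orP: He => /andP[H1 H2]; rewrite ?H1 ?H2 ?orbT.
Qed.

Lemma all_const (e' : mE G') (x : mV G') (e : mE G') : incident x e -> deg_at phiE e = deg_at phiE e'.
Proof.
pose good z := forall e, incident z e -> deg_at phiE e = deg_at phiE e'.
have step : forall (z : mV G') (p : seq (mV G')), good z -> path (@adjacent R G') z p -> good (last z p).
  move=> z p; elim: p z => [|y p IH] z //= Gz /andP[/existsP[ee Hee] Hp].
  apply: IH Hp => f Hf.
  have Hy : incident y ee by rewrite /incident; by case/orP: Hee => /andP[H1 H2]; rewrite ?H1 ?H2 ?orbT.
  have Hz : incident z ee by rewrite /incident; by case/orP: Hee => /andP[H1 H2]; rewrite ?H1 ?H2 ?orbT.
  by rewrite (@ph_const y f ee Hf Hy) Gz.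
have g0 : good (msrc e').
  by move=> f Hf; apply: (@ph_const (msrc e') f e' Hf); rewrite /incident eqxx.
have /connectP[p Hp Hl] := cG' (msrc e') x.
by move=> He; have := step _ _ g0 Hp; rewrite -Hl; apply.
Qed.
End Aux.
Theorem lemma6p9 (R : realType) (G G' : wmodel R)
    (phiV : mV G -> mV G') (phiE : mE G -> mV G' + mE G') :
  @loopless_model R G -> @loopless_model R G' ->
  is_morphism phiV phiE ->
  pseudo_harmonic phiV phiE ->
  forall e' : mE G',
    deg_div (pullback phiV phiE (@Kcan R G')) =
    (deg_at phiE e')%:Z * deg_div (@Kcan R G').
Proof.
move=> [llG cG _] [llG' cG' _] mor ph e'.
rewrite /deg_div /pullback.
rewrite (partition_big phiV predT) //= big_distrr /=.
apply: eq_bigr => x _.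
have [f Hf] := @has_edge R G' cG' e' x.
case E: [pick e | incident x e] => [g|]; last first.
  by move: E; case: pickP => [//|none _]; have := none f; rewrite Hf.
have Hg : incident x g by move: E; case: pickP => // g' Hg' [<-].
transitivity (\sum_(v | phiV v == x) (Mloc phiE v g)%:Z * @Kcan R G' x).
  by apply: eq_bigr => v /eqP Hv; rewrite /M Hv E.
rewrite -big_distrl /=.
have -> : (\sum_(v | phiV v == x) (Mloc phiE v g)%:Z) = (\sum_(v | phiV v == x) Mloc phiE v g)%N%:Z.
  by rewrite -natz natr_sum; apply: eq_bigr => v _; rewrite natz.
rewrite (fiber_sum _ _ _ _ _ llG llG' mor _ _ Hg) (all_const _ _ _ _ _ llG llG' mor ph cG' e' _ _ Hg) //=.
Qed.
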